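(* Let $G$ be a finite group, $R$ an integral domain and $X$ a transitive $G$-set. If no prime divisor of $|X|$ is invertible in $R$, then the $RG$-permutation module $RX$ is indecomposable. *)

(* Defs.v *)
From HB Require Import structures.
From mathcomp Require Import all_boot all_order all_algebra all_fingroup.
Set Implicit Arguments. Unset Strict Implicit. Unset Printing Implicit Defensive.
Import GRing.Theory.
Local Open Scope ring_scope.

(* The permutation module RX over a ring R for a finite G-set X (carrier T,
   G acting through the action [to]) is the free R-module {ffun T -> R} with
   basis the indicator functions of points; g acts by (g.f)(x) = f(x^(g^-1)),
   which sends the basis vector of x to that of x^g. *)
Definition perm_act (gT : finGroupType) (T : finType) (R : nzRingType)
  (to : {action gT &-> T}) (g : gT) (f : {ffun T -> R}) : {ffun T -> R} :=
  [ffun x => f (to x (g^-1)%g)].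

Definition is_RGsubmod (gT : finGroupType) (G : {group gT}) (T : finType)
  (R : nzRingType) (to : {action gT &-> T}) (M : {ffun T -> R} -> Prop) :=
  [/\ M 0,
      (forall u v, M u -> M v -> M (u + v)),
      (forall (a : R) u, M u -> M [ffun x => a * u x]) &
      (forall g u, g \in G -> M u -> M (perm_act to g u))].

Definition RG_perm_indecomposable (gT : finGroupType) (G : {group gT})
  (T : finType) (R : nzRingType) (to : {action gT &-> T}) : Prop :=
  (exists v : {ffun T -> R}, v <> 0) /\
  forall M N : {ffun T -> R} -> Prop,
    is_RGsubmod G to M -> is_RGsubmod G to N ->
    (forall v, M v -> N v -> v = 0) ->
    (forall v, exists m n, [/\ M m, N n & v = m + n]) ->
    (forall m, M m -> m = 0) \/ (forall n, N n -> n = 0).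

(* Main.v *)
Require Import Defs.
From HB Require Import structures.
From mathcomp Require Import all_boot all_order all_algebra all_fingroup.
From mathcomp Require Import all_solvable.
From mathcomp Require Import ring.
From Stdlib Require Import Classical IndefiniteDescription.
Set Implicit Arguments. Unset Strict Implicit. Unset Printing Implicit Defensive.
Import GRing.Theory.
Local Open Scope ring_scope.

Section Basics.
Variables (gT : finGroupType) (T : finType) (R : idomainType) (to : {action gT &-> T}).
Local Notation vec := {ffun T -> R}.
Local Notation pa := (@perm_act gT T R to).

Lemma paE g (u : vec) x : pa g u x = u (to x g^-1%g).
Proof. by rewrite ffunE. Qed.

Lemma paD g (u v : vec) : pa g (u + v) = pa g u + pa g v.
Proof. by apply/ffunP=> x; rewrite !ffunE. Qed.

Lemma paN g (u : vec) : pa g (- u) = - pa g u.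
Proof. by apply/ffunP=> x; rewrite !ffunE. Qed.

Lemma paB g (u v : vec) : pa g (u - v) = pa g u - pa g v.
Proof. by rewrite paD paN. Qed.

Lemma pa0 g : pa g 0 = 0.
Proof. by apply/ffunP=> x; rewrite !ffunE. Qed.

Lemma paZ g (a : R) (u : vec) : pa g [ffun x => a * u x] = [ffun x => a * pa g u x].
Proof. by apply/ffunP=> x; rewrite !ffunE. Qed.

Lemma pa1 (u : vec) : pa 1%g u = u.
Proof. by apply/ffunP=> x; rewrite !ffunE invg1 act1. Qed.

Lemma paM g h (u : vec) : pa (g * h)%g u = pa h (pa g u).
Proof. by apply/ffunP=> x; rewrite !ffunE invMg actM. Qed.

Lemma paX g i (u : vec) : pa (g ^+ i)%g u = iter i (pa g) u.
Proof. by elim: i => [|i IH]; rewrite ?expg0 ?pa1 // expgSr paM IH. Qed.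

Lemma scaleN1 (u : vec) : [ffun x => -1 * u x] = - u.
Proof. by apply/ffunP=> x; rewrite !ffunE mulN1r. Qed.

Definition closedV (V : vec -> Prop) (L : {set gT}) :=
  [/\ forall u v, V u -> V v -> V (u + v),
      forall (a : R) u, V u -> V [ffun x => a * u x] &
      forall h u, h \in L -> V u -> V (pa h u)].

Lemma closedVB V L u v : closedV V L -> V u -> V v -> V (u - v).
Proof.
case=> cD cZ _ Vu Vv; apply: cD => //.
by rewrite -scaleN1; apply: cZ.
Qed.

Lemma closedVS V (L1 L2 : {set gT}) : L1 \subset L2 -> closedV V L2 -> closedV V L1.
Proof.
move=> sL [cD cZ cA]; split=> // h u Lh; apply: cA; exact: (subsetP sL).
Qed.

End Basics.

Section Pascal.
Variable R : comNzRingType.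
Definition cb k i : R := (-1) ^+ (k - i) * ('C(k, i))%:R.

Lemma pascal_step (f : nat -> R) k :
  \sum_(i < k.+1) cb k i * (f i.+1 - f i) = \sum_(i < k.+2) cb k.+1 i * f i.
Proof.
rewrite (eq_bigr (fun i : 'I_k.+1 => cb k i * f i.+1 - cb k i * f i));
  last by move=> i _; rewrite mulrBr.
rewrite sumrB big_ord_recr [X in _ - X]big_ord_recl /=.
rewrite [in RHS]big_ord_recr [in RHS]big_ord_recl /=.
have e1 : forall i : 'I_k, cb k.+1 (bump 0 i) = cb k i - cb k (bump 0 i).
  move=> [i /= lt_ik]; rewrite /cb /bump /= !add1n subSS binS natrD mulrDr.
  have -> : (k - i = (k - i.+1).+1)%N by rewrite subnSK.
  rewrite exprS !mulN1r !mulNr; ring.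
under [X in _ = _ + X + _]eq_bigr => i _ do rewrite e1.
under [X in _ = _ + X + _]eq_bigr => i _ do rewrite mulrBl.
rewrite sumrB.
have -> : \sum_(i < k) cb k i * f (bump 0 i) = \sum_(i < k) cb k i * f i.+1.
  by apply: eq_bigr => i _; rewrite /bump add1n.
have -> : cb k.+1 0 = - cb k 0 by rewrite /cb !subn0 !bin0 exprS mulN1r mulNr.
have -> : cb k.+1 k.+1 = cb k k by rewrite /cb !subnn !binn.
ring.
Qed.
End Pascal.

Section CharQ.
Variables (gT : finGroupType) (T : finType) (R : idomainType) (to : {action gT &-> T}).
Local Notation vec := {ffun T -> R}.
Local Notation pa := (@perm_act gT T R to).

Definition Dop g (u : vec) := pa g u - u.

Lemma iterD_formula g k (u : vec) x :
  iter k (Dop g) u x = \sum_(i < k.+1) cb R k i * iter i (pa g) u x.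
Proof.
elim: k x => [|k IH] x.
  by rewrite big_ord_recl big_ord0 /cb /= expr0 mul1r bin0 mul1r addr0.
rewrite -(pascal_step (fun i => iter i (pa g) u x)) iterS.
set w := iter k (Dop g) u; rewrite /Dop !ffunE /w !IH -sumrB.
apply: eq_bigr => i _; rewrite mulrBr; congr (_ * _ - _).
by rewrite iterS ffunE.
Qed.

Lemma iterD_q q (qchar : q \in [pchar R]) g (u : vec) : iter q (Dop g) u = pa (g ^+ q)%g u - u.
Proof.
have qp : prime q := pcharf_prime qchar.
apply/ffunP=> x; rewrite iterD_formula paX ffunE [in RHS]ffunE.
have cbq0 : forall i, (0 < i < q)%N -> cb R q i = 0.
  move=> i iq; rewrite /cb.
  have /eqP -> : ('C(q, i))%:R == 0 :> R.
    by rewrite -(dvdn_pcharf qchar) prime_dvd_bin.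
  by rewrite mulr0.
have cbqq : cb R q q = 1 by rewrite /cb subnn binn expr0 mulr1.
have cbq0' : cb R q 0 = -1.
  rewrite /cb subn0 bin0 mulr1.
  by have := pFrobenius_autN qchar 1; rewrite !pFrobenius_autE expr1n.
move: cbq0 cbqq cbq0' qp; case: q qchar => [|m] // _ cbq0 cbqq cbq0' _.
rewrite big_ord_recr big_ord_recl /= big1 ?addr0; last first.
  move=> [i /= ltiq] _; rewrite cbq0 ?mul0r //.
by rewrite cbqq cbq0' mul1r mulN1r addrC.
Qed.
End CharQ.

Lemma last_true (P : nat -> bool) n : P 0 -> ~~ P n -> exists i, P i && ~~ P i.+1.
Proof.
move=> P0; elim: n => [|n IH]; first by rewrite P0.
case: (boolP (P n)) => [Pn nPn1 | nPn _]; first by exists n; rewrite Pn nPn1.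
exact: IH.
Qed.

Section FixedPt.
Variables (gT : finGroupType) (T : finType) (R : idomainType) (to : {action gT &-> T}).
Variable q : nat.
Hypothesis qchar : q \in [pchar R].
Local Notation vec := {ffun T -> R}.
Local Notation pa := (@perm_act gT T R to).

Lemma fixed_exists (L : {group gT}) : (q.-group L)%g ->
  forall V : vec -> Prop, closedV to V L -> forall v, V v -> v != 0 ->
  exists w, [/\ V w, w != 0 & forall h, h \in L -> pa h w = w].
Proof.
move=> qL; have [n] := ubnP #|L|; elim: n L qL => // n IHn L qL ltLn V cV v Vv nzv.
case: (eqsVneq L 1%g) => [L1 | ntL].
  by exists v; split=> // h; rewrite L1 => /set1P ->; exact: pa1.
have [L1'|[K maxK _]] := maximal_exists (sub1G L).
  by rewrite -L1' eqxx in ntL.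
have nKL := p_maximal_normal qL maxK.
have prKL : K \proper L := maxgroupp maxK.
have [sKL [g Lg notKg]] := properP prKL.
have ltKn : (#|K| < n)%N.
  by apply: leq_trans (proper_card prKL) _; rewrite -ltnS.
have qK := pgroupS sKL qL.
have [w0 [Vw0 nzw0 fixw0]] := IHn K qK ltKn V (closedVS sKL cV) v Vv nzv.
pose W u := V u /\ forall k, k \in K -> pa k u = u.
have [cD cZ cA] := cV.
have WD : forall u, W u -> W (Dop to g u).
  move=> u [Vu fu]; split; first by apply: (closedVB cV) => //; apply: cA.
  move=> k Kk; rewrite /Dop paB (fu k Kk) -paM.
  have -> : (g * k = (k ^ g^-1) * g)%g.
    by rewrite conjgE invgK !mulgA mulgVK.
  rewrite paM fu //.
  by rewrite memJ_norm // groupV (subsetP (normal_norm nKL)).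
have Witer : forall i, W (iter i (Dop to g) w0).
  by elim=> [|i IH] //=; apply: WD.
have gqK : (g ^+ q \in K)%g.
  have := Mho_p_elt 1 Lg (mem_p_elt qL Lg); rewrite expn1 => Mg.
  apply: (subsetP (Phi_sub_max maxK)); rewrite (Phi_joing qL).
  exact: (subsetP (joing_subr _ _)).
have iterq0 : iter q (Dop to g) w0 = 0.
  by rewrite (iterD_q to qchar) fixw0 // subrr.
have [i /andP[nzi zi1]] :
    exists i, (iter i (Dop to g) w0 != 0) && ~~ (iter i.+1 (Dop to g) w0 != 0).
  by apply: (@last_true (fun i => iter i (Dop to g) w0 != 0) q) => //=;
    rewrite iterq0 eqxx.
set w := iter i (Dop to g) w0.
have [Vw fw] := Witer i.
have gw : pa g w = w.
  by move: zi1; rewrite negbK iterS /Dop -/w subr_eq0 => /eqP.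
have gS : group_set [set h in L | pa h w == w].
  apply/group_setP; split; first by rewrite inE group1 pa1 eqxx.
  move=> x y; rewrite !inE => /andP[Lx /eqP px] /andP[Ly /eqP py].
  by rewrite groupM // paM px py eqxx.
pose S := Group gS.
have sSL : S \subset L by apply/subsetP=> h; rewrite inE => /andP[].
have sKS : K \subset S.
  by apply/subsetP=> k Kk; rewrite inE (subsetP sKL) //= fw.
have gSg : g \in S by rewrite inE Lg gw eqxx.
have sLS : L \subset S.
  case: (boolP (S \proper L)) => [prS|].
    case/maxgroupP: maxK => _ /(_ S prS sKS) eqSK.
    by move: notKg; rewrite -eqSK gSg.
  by rewrite properEneq sSL andbT negbK => /eqP ->.
exists w; split=> // h Lh.
by have := subsetP sLS h Lh; rewrite inE => /andP[_ /eqP].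
Qed.
End FixedPt.

Lemma sylow_transitive (gT : finGroupType) (T : finType) (to : {action gT &-> T})
   (G Q : {group gT}) (q : nat) (x0 : T) :
  [transitive G, on [set: T] | to] -> (q.-Sylow(G) Q)%g -> q.-nat #|T| ->
  forall y, exists2 h, h \in Q & to x0 h = y.
Proof.
move=> trG sylQ qT y.
have sQG := pHall_sub sylQ; have qQ := pHall_pgroup sylQ.
have orbG : orbit to G x0 = [set: T] := atransP trG _ (in_setT x0).
have eG := card_orbit_stab to G x0; have eQ := card_orbit_stab to Q x0.
rewrite orbG cardsT in eG.
set C := ('C_G[x0 | to])%g in eG; set CQ := ('C_Q[x0 | to])%g in eQ.
have sCQC : CQ \subset C by apply: setSI.
have qCQ : (q.-group CQ)%g by apply: pgroupS qQ; apply: subsetIl.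
have CQdv : (#|CQ| %| #|C|`_q)%N.
  rewrite -(part_pnat_id qCQ); apply: partn_dvd; first exact: cardG_gt0.
  exact: cardSg.
have T0 : (0 < #|T|)%N by rewrite -cardsT -orbG (cardsD1 x0) orbit_refl.
have cQ : #|Q| = (#|T| * #|C|`_q)%N.
  by rewrite (card_Hall sylQ) -eG partnM ?cardG_gt0 // part_pnat_id.
have le1 : (#|T| * #|CQ| <= #|orbit to Q x0| * #|CQ|)%N.
  rewrite eQ cQ leq_mul2l dvdn_leq ?orbT //; exact: part_gt0.
rewrite leq_mul2r (negPf (lt0n_neq0 (cardG_gt0 _))) /= in le1.
have : orbit to Q x0 == [set: T] by rewrite eqEcard subsetT cardsT.
by move/eqP=> oQ; apply/orbitP; rewrite oQ in_setT.
Qed.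

Lemma fixed_const (gT : finGroupType) (T : finType) (R : idomainType)
  (to : {action gT &-> T}) (Q : {set gT}) (x0 : T) (w : {ffun T -> R}) :
  (forall y, exists2 h, h \in Q & to x0 h = y) ->
  (forall h, h \in Q -> perm_act to h w = w) -> forall y, w y = w x0.
Proof.
move=> tQ fw y; have [h Qh <-] := tQ y.
by rewrite -{1}(fw h Qh) paE actK.
Qed.

Lemma charq_case (gT : finGroupType) (G : {group gT}) (R : idomainType)
  (T : finType) (to : {action gT &-> T}) (q : nat) (qchar : q \in [pchar R]) :
  [transitive G, on [set: T] | to] ->
  (forall p : nat, prime p -> (p %| #|T|)%N -> ~~ ((p%:R : R) \is a GRing.unit)) ->
  forall M N : {ffun T -> R} -> Prop,
    is_RGsubmod G to M -> is_RGsubmod G to N ->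
    (forall v, M v -> N v -> v = 0) ->
    (forall m, M m -> m = 0) \/ (forall n, N n -> n = 0).
Proof.
move=> htrans hprimes M N [M0 MD MZ MA] [N0 ND NZ NA] hdisj.
have qp : prime q := pcharf_prime qchar.
have /imsetP[x0 _ _] : [set: T] \in orbit to G @: [set: T] := htrans.
have T0 : (0 < #|T|)%N by apply/card_gt0P; exists x0.
have qT : q.-nat #|T|.
  apply/pnatP => // p pp pdvd; rewrite inE.
  apply/negPn/negP => npq; case/negP: (hprimes p pp pdvd).
  have cop : coprime p q by rewrite prime_coprime // dvdn_prime2.
  case: (egcdnP q (prime_gt0 pp)) => km kn Ekm _.
  apply/unitrPr; exists km%:R.
  by rewrite mulrC -natrM Ekm natrD natrM (pcharf0 qchar) mulr0 add0r (eqP cop).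
have [Q sylQ] := Sylow_exists q G.
have sQG := pHall_sub sylQ; have qQ := pHall_pgroup sylQ.
have tQ := sylow_transitive x0 htrans sylQ qT.
have cM : closedV to M Q.
  by split=> // h u Qh; apply: MA; apply: (subsetP sQG).
have cN : closedV to N Q.
  by split=> // h u Qh; apply: NA; apply: (subsetP sQG).
case: (classic (forall m, M m -> m = 0)) => [allM|nM]; first by left.
right.
move=> n Nn; apply: NNPP => nzn.
have [m Hm] := not_all_ex_not _ _ nM.
have [Mm nzm] := imply_to_and _ _ Hm.
have [w1 [Mw1 nzw1 fw1]] := fixed_exists qchar qQ cM Mm (introN eqP nzm).
have [w2 [Nw2 nzw2 fw2]] := fixed_exists qchar qQ cN Nn (introN eqP nzn).
have c1 := fixed_const tQ fw1; have c2 := fixed_const tQ fw2.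
have a0 : w1 x0 != 0.
  by apply: contra nzw1 => /eqP z; apply/eqP/ffunP => y; rewrite c1 z ffunE.
have b0 : w2 x0 != 0.
  by apply: contra nzw2 => /eqP z; apply/eqP/ffunP => y; rewrite c2 z ffunE.
have E : [ffun x => w2 x0 * w1 x] = [ffun x => w1 x0 * w2 x].
  by apply/ffunP => y; rewrite !ffunE c1 c2 mulrC.
have := hdisj _ (MZ (w2 x0) _ Mw1) (eq_ind_r N (NZ (w1 x0) _ Nw2) E).
move/ffunP/(_ x0); rewrite !ffunE => /eqP; rewrite mulf_eq0.
by rewrite (negPf a0) (negPf b0).
Qed.
Lemma tr_pid (F : fieldType) n r : (r <= n)%N -> \tr (pid_mx r : 'M[F]_n) = r%:R.
Proof.
move=> le_rn; rewrite /mxtrace.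
under eq_bigr do rewrite mxE eqxx /=.
transitivity (\sum_(i < n | (i < r)%N) (1 : F)).
  by rewrite [RHS]big_mkcond; apply: eq_bigr => i _; case: (i < r)%N.
by rewrite -(big_ord_widen n (fun _ => (1 : F))) // sumr_const card_ord.
Qed.

Lemma tr_idem (F : fieldType) n (B : 'M[F]_n) : B *m B = B -> \tr B = (\rank B)%:R.
Proof.
move=> BB.
set L := col_ebase B; set U := row_ebase B; set P := (pid_mx (\rank B) : 'M[F]_n).
have eB : L *m P *m U = B by rewrite /L /U /P mulmx_ebase.
have uL : L \in unitmx := col_ebase_unit B.
have uU : U \in unitmx := row_ebase_unit B.
have PP : P *m P = P by rewrite /P pid_mx_id // rank_leq_row.
have key : P *m (U *m L) *m P = P.
  have : L *m (P *m (U *m L) *m P) *m U = L *m P *m U.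
    transitivity (B *m B); first by rewrite -eB !mulmxA.
    by rewrite BB eB.
  move/(congr1 (mulmx (invmx L))); rewrite !mulmxA mulVmx // !mul1mx.
  move/(congr1 (mulmx^~ (invmx U))); rewrite -!mulmxA mulmxV // !mulmx1.
  by rewrite !mulmxA.
rewrite -eB -mulmxA mxtrace_mulC -mulmxA -{1}PP -mulmxA mxtrace_mulC.
by rewrite key mulmxA eB tr_pid // rank_leq_row.
Qed.

Lemma integrality (R : idomainType) (h0 : [pchar R] =i pred0) n r (b : R) :
  (0 < r < n)%N -> n%:R * b = r%:R ->
  exists p, [/\ prime p, (p %| n)%N & (p%:R : R) \is a GRing.unit].
Proof.
case/andP=> r0 rn Eb.
have n0 : (0 < n)%N by apply: ltn_trans rn.
have nz k : (k%:R == 0 :> R) = (k == 0)%N by have := (pcharf0P R).1 h0 k.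
set d := gcdn r n.
have d0 : (0 < d)%N by rewrite gcdn_gt0 r0.
set u := (n %/ d)%N; set w := (r %/ d)%N.
have en : n = (u * d)%N by rewrite /u divnK // dvdn_gcdr.
have er : r = (w * d)%N by rewrite /w divnK // dvdn_gcdl.
have w0 : (0 < w)%N by move: r0; rewrite er muln_gt0 => /andP[].
have cop : coprime w u.
  rewrite /coprime /w /u -(@eqn_pmul2r d) // muln_gcdl !divnK ?dvdn_gcdl ?dvdn_gcdr //.
  by rewrite mul1n.
have Eb' : u%:R * b = w%:R :> R.
  apply/eqP; rewrite -subr_eq0; apply/eqP.
  have : d%:R * (u%:R * b - w%:R) = 0 :> R.
    by rewrite mulrBr mulrA -natrM mulnC -en Eb -natrM mulnC -er subrr.
  by move/eqP; rewrite mulf_eq0 nz (negPf (lt0n_neq0 d0)) /= => /eqP.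
have uU : (u%:R : R) \is a GRing.unit.
  case: (egcdnP u w0) => km kn Ekm _.
  apply/unitrPr; exists (km%:R * b - kn%:R).
  rewrite mulrBr mulrCA Eb' -!natrM Ekm (eqP cop) natrD mulnC.
  by rewrite addrC addKr.
have u1 : (1 < u)%N.
  rewrite ltn_neqAle eq_sym; apply/andP; split.
    apply/eqP => u1; move: rn; rewrite en u1 mul1n er.
    by rewrite -{2}[d]mul1n ltn_mul2r d0 ltnS leqn0 (negPf (lt0n_neq0 w0)).
  by move: n0; rewrite en muln_gt0 => /andP[].
exists (pdiv u); split; first exact: pdiv_prime.
  by apply: dvdn_trans (pdiv_dvd u) _; rewrite en dvdn_mulr.
case/dvdnP: (pdiv_dvd u) => k ek.
by have := uU; rewrite {1}ek natrM unitrM => /andP[_ H].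
Qed.


Section Char0.
Variables (gT : finGroupType) (G : {group gT}) (R : idomainType) (T : finType)
  (to : {action gT &-> T}).
Hypothesis h0 : [pchar R] =i pred0.
Hypothesis htrans : [transitive G, on [set: T] | to].
Hypothesis hprimes : forall p : nat, prime p -> (p %| #|T|)%N ->
                ~~ ((p%:R : R) \is a GRing.unit).
Variables M N : {ffun T -> R} -> Prop.
Hypothesis subM : is_RGsubmod G to M.
Hypothesis subN : is_RGsubmod G to N.
Hypothesis hdisj : forall v, M v -> N v -> v = 0.
Hypothesis hdec : forall v, exists m n, [/\ M m, N n & v = m + n].
Local Notation vec := {ffun T -> R}.
Local Notation pa := (@perm_act gT T R to).
Local Notation tf := (@FracField.tofrac R).
Local Notation ev := (@enum_val T (mem T)).

Definition ebasis (y : T) : vec := [ffun z => ((z == y)%:R : R)].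

Lemma char0_main : (forall m, M m -> m = 0) \/ (forall n, N n -> n = 0).
Proof.
have [M0 MD MZ MA] := subM; have [N0 ND NZ NA] := subN.
have /imsetP[x0 _ _] : [set: T] \in orbit to G @: [set: T] := htrans.
have NB : forall u v, N u -> N v -> N (u - v).
  by move=> u v Nu Nv; apply: ND => //; rewrite -scaleN1; apply: NZ.
have hdec' : forall v, exists n, N n /\ M (v - n).
  move=> v; have [m [n [Mm Nn ev']]] := hdec v.
  by exists n; split=> //; rewrite ev' addrK.
pose Pf v := proj1_sig (constructive_indefinite_description _ (hdec' v)).
have PfP : forall v, N (Pf v) /\ M (v - Pf v).
  by move=> v; exact: (proj2_sig (constructive_indefinite_description _ (hdec' v))).
have Puniq : forall v n, N n -> M (v - n) -> Pf v = n.
  move=> v n Nn Mvn; have [NP MP] := PfP v.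
  apply/eqP; rewrite -subr_eq0; apply/eqP; apply: hdisj; last exact: NB.
  have -> : Pf v - n = (v - n) - (v - Pf v) by rewrite opprB addrCA addrAC subrr add0r.
  by apply: MD => //; rewrite -scaleN1; apply: MZ.
have Plin : forall u v, Pf (u + v) = Pf u + Pf v.
  move=> u v; apply: Puniq; first by apply: ND; apply PfP.
  have -> : u + v - (Pf u + Pf v) = (u - Pf u) + (v - Pf v).
    by rewrite opprD addrACA.
  by apply: MD; apply PfP.
have Pscal : forall (a : R) (u : vec), Pf [ffun x => a * u x] = [ffun x => a * Pf u x].
  move=> a u; apply: Puniq; first by apply: NZ; apply PfP.
  have -> : [ffun x => a * u x] - [ffun x => a * Pf u x] =
            [ffun x => a * (u - Pf u) x].
    by apply/ffunP=> x; rewrite !ffunE mulrBr.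
  by apply: MZ; apply PfP.
have Pact : forall g u, g \in G -> Pf (pa g u) = pa g (Pf u).
  move=> g u Gg; apply: Puniq; first by apply: NA => //; apply PfP.
  by rewrite -paB; apply: MA => //; apply PfP.
have PN : forall n, N n -> Pf n = n.
  by move=> n Nn; apply: Puniq => //; rewrite subrr.
have PM : forall m, M m -> Pf m = 0.
  by move=> m Mm; apply: Puniq => //; rewrite subr0.
have P0 : Pf 0 = 0 := PM 0 M0.
have expand : forall u : vec,
    u = \sum_(i < #|T|) [ffun z => u (ev i) * ebasis (ev i) z].
  move=> u; apply/ffunP => z; rewrite sum_ffunE (bigD1 (enum_rank z)) //=.
  rewrite !ffunE enum_rankK eqxx mulr1 big1 ?addr0 // => i ne.
  rewrite !ffunE; have -> : (z == ev i) = false.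
    by apply/negbTE; apply: contra ne => /eqP ->; rewrite enum_valK.
  by rewrite mulr0.
have Psum : forall (F : 'I_#|T| -> vec), Pf (\sum_i F i) = \sum_i Pf (F i).
  by move=> F; elim/big_rec2: _ => [|i a b _ <-]; rewrite ?P0 ?Plin.
have Pexp : forall u x,
    Pf u x = \sum_(i < #|T|) u (ev i) * Pf (ebasis (ev i)) x.
  move=> u x; rewrite {1}(expand u) Psum sum_ffunE.
  by apply: eq_bigr => i _; rewrite Pscal ffunE.
pose A : 'M[{fraction R}]_#|T| :=
  \matrix_(i, j) tf (Pf (ebasis (ev j)) (ev i)).
have AA : A *m A = A.
  apply/matrixP => i j; rewrite !mxE.
  under eq_bigr do rewrite !mxE -rmorphM.
  rewrite -rmorph_sum; congr (tf _).
  rewrite -{2}(PN _ (PfP (ebasis (ev j))).1) (Pexp _ (ev i)).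
  by apply: eq_bigr => k _; rewrite mulrC.
set b := Pf (ebasis x0) x0.
have diag : forall y, Pf (ebasis y) y = b.
  move=> y; have : y \in orbit to G x0 by rewrite (atransP htrans _ (in_setT x0)) in_setT.
  case/orbitP => g Gg <-.
  have -> : ebasis (to x0 g) = pa g (ebasis x0).
    apply/ffunP => z; rewrite !ffunE; congr (_%:R); congr (nat_of_bool _).
    case: (eqVneq z (to x0 g)) => [->|ne]; first by rewrite actK eqxx.
    by symmetry; apply/negbTE; apply: contra ne => /eqP <-; rewrite actKV.
  by rewrite Pact // paE actK.
have trA : \tr A = tf (#|T|%:R * b).
  rewrite /mxtrace; under eq_bigr do rewrite mxE diag.
  by rewrite sumr_const card_ord mulr_natl rmorphMn.
have rk := tr_idem AA.
set r := \rank A in rk.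
have Eb : #|T|%:R * b = r%:R :> R.
  by apply/eqP; rewrite -tofrac_eq rmorph_nat -trA rk.
have rle : (r <= #|T|)%N := rank_leq_row A.
have neq_ev : forall x i, i != enum_rank x -> (x == ev i) = false.
  by move=> x i ne; apply/negbTE; apply: contra ne => /eqP ->; rewrite enum_valK.
case: (posnP r) => [r0 | rpos].
  right; have /eqP A0 : A == 0 by rewrite -mxrank_eq0 -/r r0.
  have Pz : forall y x, Pf (ebasis y) x = 0.
    move=> y x; apply/eqP; rewrite -tofrac_eq0.
    have := congr1 (fun B : 'M[{fraction R}]_#|T| => B (enum_rank x) (enum_rank y)) A0.
    by rewrite /= !mxE !enum_rankK => ->.
  move=> n Nn; rewrite -(PN _ Nn); apply/ffunP => x.
  by rewrite Pexp ffunE big1 // => i _; rewrite Pz mulr0.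
case: (eqVneq r #|T|) => [rn | rn]; last first.
  have rlt : (0 < r < #|T|)%N by rewrite rpos ltn_neqAle rn rle.
  have [p [pp pdvd pU]] := integrality h0 rlt Eb.
  by move: (hprimes pp pdvd); rewrite pU.
left.
have uA : A \in unitmx by rewrite -row_full_unit /row_full -/r rn.
have A1 : 1%:M = A by have := mulKmx uA A; rewrite AA mulVmx.
have Pid : forall y x, Pf (ebasis y) x = (x == y)%:R.
  move=> y x; apply/eqP; rewrite -tofrac_eq rmorph_nat.
  have := congr1 (fun B : 'M[{fraction R}]_#|T| => B (enum_rank x) (enum_rank y)) A1.
  rewrite /= !mxE !enum_rankK => <-.
  by rewrite (inj_eq enum_rank_inj).
move=> m Mm; rewrite -(PM _ Mm); apply/ffunP => x.
rewrite Pexp (bigD1 (enum_rank x)) //= Pid enum_rankK eqxx mulr1 big1 ?addr0 //.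
by move=> i ne; rewrite Pid neq_ev // mulr0.
Qed.
End Char0.

Unset Implicit Arguments.

Theorem lemma3p1 (gT : finGroupType) (G : {group gT}) (R : idomainType)
  (T : finType) (to : {action gT &-> T})
  (htrans : [transitive G, on [set: T] | to])
  (hprimes : forall p : nat, prime p -> (p %| #|T|)%N ->
                ~~ ((p%:R : R) \is a GRing.unit)) :
  RG_perm_indecomposable G R to.
Proof.
have /imsetP[x0 _ _] : [set: T] \in orbit to G @: [set: T] := htrans.
split.
  exists [ffun z => ((z == x0)%:R : R)].
  by move/ffunP/(_ x0); rewrite !ffunE eqxx => /eqP; rewrite oner_eq0.
move=> M N sM sN hdisj hdec.
case: (classic (exists q, q \in [pchar R])) => [[q qc] | nq].
  exact: (charq_case qc htrans hprimes sM sN hdisj).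
have h0 : [pchar R] =i pred0.
  by move=> q; rewrite [RHS]inE; apply/negP => qc; apply: nq; exists q.
exact: (char0_main h0 htrans hprimes sM sN hdisj hdec).
Qed.
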